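(* In the half-line setting, assume $r_j=0$ for all $j\ge0$ and $C_R<\infty$ (positive recurrence). Let $\pi$ be as defined below. Then for every $j\ge0$, every unit vector $\Psi_0=\sum_{k\ge0:|k-j|=1}\alpha_k\delta_{(k,j)}$ and every $i\ge0$, $$\overline{\mu}^{(\Psi_0)}_\infty(i)\ \ge\ 2\,|\langle a_j,\Psi_0\rangle|^2\,\pi(i)\,\pi(j).$$
   Context: Half-line setting: $V=\mathbb{Z}_+$, parameters $p_j,q_j,r_j\ge0$ with $p_j+q_j+r_j=1$, $q_0=0$, $p_j>0$ ($j\ge0$), $q_j>0$ ($j\ge1$); here $r_j=0$, so there are no self loops. Arcs: $|j;R\rangle=\delta_{(j+1,j)}$ ($j\ge0$), $|j;L\rangle=\delta_{(j-1,j)}$ ($j\ge1$), arc $(u,v)$ going from $v$ to $u$. Shift $S$: $|j;R\rangle\leftrightarrow|j+1;L\rangle$. $a_j=\sqrt{q_j}|j;L\rangle+\sqrt{p_j}|j;R\rangle$. $\Pi_A$ is the orthogonal projection onto the closed span of $\{a_j\}$, $C=2\Pi_A-I$, $U=SC$. $P(X_t=i)=\sum_J|\langle i;J|U^t\Psi_0\rangle|^2$ over arcs out of $i$; $\overline{\mu}^{(\Psi_0)}_\infty(i)=\lim_{T\to\infty}\frac1T\sum_{t=0}^{T-1}P(X_t=i)$. $C_R=\sum_{j\ge1}\frac{p_0\cdots p_{j-1}}{q_1\cdots q_j}$ and $\pi(j)=\frac1{1+C_R}\{\delta_0(j)+(1-\delta_0(j))\frac{p_0\cdots p_{j-1}}{q_1\cdots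 q_j}\}$. *)

(* Defs.v *)
From Stdlib Require Import Reals.
Open Scope R_scope.

Record Cx : Type := mkCx { re : R ; im : R }.
Definition Cx0 : Cx := mkCx 0 0.
Definition Cxadd (z w : Cx) : Cx := mkCx (re z + re w) (im z + im w).
Definition Cxsub (z w : Cx) : Cx := mkCx (re z - re w) (im z - im w).
Definition Cxscale (a : R) (z : Cx) : Cx := mkCx (a * re z) (a * im z).
Definition Cxnorm2 (z : Cx) : R := re z * re z + im z * im z.

(* Arcs of the half line Z_+ (no self loops since r_j = 0):
     Rt j  =  |j;R>   = delta_{(j+1,j)}  (arc from j to j+1), j >= 0
     Lf j  =  |j+1;L> = delta_{(j,j+1)}  (arc from j+1 to j), j >= 0   *)
Inductive arc : Type := Rt (j : nat) | Lf (j : nat).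

Definition tail (e : arc) : nat := match e with Rt j => j | Lf j => S j end.

Definition state := arc -> Cx.

(* <a_j, psi>, where a_j = sqrt q_j |j;L> + sqrt p_j |j;R>  (a_j is real);
   for j = 0 there is no arc |0;L> (and q_0 = 0). *)
Definition ip_a (p q : nat -> R) (j : nat) (psi : state) : Cx :=
  match j with
  | O => Cxscale (sqrt (p 0%nat)) (psi (Rt 0))
  | S k => Cxadd (Cxscale (sqrt (q j)) (psi (Lf k))) (Cxscale (sqrt (p j)) (psi (Rt j)))
  end.

(* Pi_A psi = sum_j <a_j,psi> a_j  (orthogonal projection onto the closed span
   of the orthonormal family {a_j}, whose members have disjoint supports);
   evaluated at the arc e it only involves j = tail e. *)
Definition projA (p q : nat -> R) (psi : state) : state :=
  fun e => match e with
  | Rt j => Cxscale (sqrt (p j)) (ip_a p q j psi)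
  | Lf j => Cxscale (sqrt (q (S j))) (ip_a p q (S j) psi)
  end.

Definition coin (p q : nat -> R) (psi : state) : state :=
  fun e => Cxsub (Cxscale 2 (projA p q psi e)) (psi e).

Definition swap (e : arc) : arc := match e with Rt j => Lf j | Lf j => Rt j end.
Definition shift (psi : state) : state := fun e => psi (swap e).

Definition Uop (p q : nat -> R) (psi : state) : state := shift (coin p q psi).

Fixpoint Upow (p q : nat -> R) (t : nat) (psi : state) : state :=
  match t with O => psi | S t' => Uop p q (Upow p q t' psi) end.

(* P(X_t = i) = sum over arcs out of i of |<i;J| U^t Psi0>|^2 *)
Definition prob (p q : nat -> R) (psi0 : state) (t i : nat) : R :=
  let psi := Upow p q t psi0 in
  Cxnorm2 (psi (Rt i)) +
  match i with O => 0 | S k => Cxnorm2 (psi (Lf k)) end.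

(* time average (1/T) sum_{t=0}^{T-1} P(X_t = i), indexed by n = T-1 *)
Definition time_avg (p q : nat -> R) (psi0 : state) (i : nat) (n : nat) : R :=
  sum_f_R0 (fun t => prob p q psi0 t i) n / INR (S n).

Fixpoint wgt (p q : nat -> R) (j : nat) : R :=
  match j with O => 1 | S k => wgt p q k * p k / q (S k) end.

Definition pi_stat (p q : nat -> R) (CR : R) (j : nat) : R :=
  / (1 + CR) * (match j with O => 1 | S _ => wgt p q j end).

(* Main.v *)
Require Import Defs.
From Stdlib Require Import Reals.
Open Scope R_scope.
From Stdlib Require Import Lra Lia Psatz FunctionalExtensionality Classical.
From Coquelicot Require Lim_seq Rbar Hierarchy.
Open Scope R_scope.

Record ips (A : Type) := mkIPS {
  good : (A -> R) -> Prop;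
  ip : (A -> R) -> (A -> R) -> R;
  V : (A -> R) -> (A -> R);
  good_lin : forall f g c d, good f -> good g -> good (fun a => c * f a + d * g a);
  good_V : forall f, good f -> good (V f);
  V_lin : forall f g c d a, V (fun a => c * f a + d * g a) a = c * V f a + d * V g a;
  ip_sym : forall f g, good f -> good g -> ip f g = ip g f;
  ip_lin : forall f g h c d, good f -> good g -> good h ->
     ip (fun a => c * f a + d * g a) h = c * ip f h + d * ip g h;
  ip_pos : forall f, good f -> 0 <= ip f f;
  V_iso : forall f, good f -> ip (V f) (V f) = ip f f
}.
Arguments good {A}. Arguments ip {A}. Arguments V {A}.

Fixpoint Vpow {A} (S : ips A) (t : nat) (f : A -> R) : A -> R :=
  match t with O => f | Datatypes.S t' => V S (Vpow S t' f) end.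
Definition Av {A} (S : ips A) (T : nat) (f : A -> R) : A -> R :=
  fun a => sum_f_R0 (fun t => Vpow S t f a) T / INR (Datatypes.S T).
Definition nr {A} (S : ips A) (f : A -> R) := sqrt (ip S f f).

Lemma good_scal A (S : ips A) f c : good S f -> good S (fun a => c * f a).
Proof. intros H. replace (fun a => c * f a) with (fun a => c * f a + 0 * f a).
 apply good_lin; auto. apply functional_extensionality; intro; ring. Qed.
Lemma good_add A (S : ips A) f g : good S f -> good S g -> good S (fun a => f a + g a).
Proof. intros H1 H2. replace (fun a => f a + g a) with (fun a => 1 * f a + 1 * g a).
 apply good_lin; auto. apply functional_extensionality; intro; ring. Qed.
Lemma good_sub A (S : ips A) f g : good S f -> good S g -> good S (fun a => f a - g a).
Proof. intros H1 H2. replace (fun a => f a - g a) with (fun a => 1 * f a + (-1) * g a).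
 apply good_lin; auto. apply functional_extensionality; intro; ring. Qed.

Lemma good_Vpow A (S : ips A) t f : good S f -> good S (Vpow S t f).
Proof. intros H; induction t; simpl; auto. apply good_V; auto. Qed.

Lemma Vpow_lin A (S : ips A) t f g c d a :
  Vpow S t (fun a => c * f a + d * g a) a = c * Vpow S t f a + d * Vpow S t g a.
Proof.
  revert a; induction t; intro a; simpl; auto.
  replace (Vpow S t (fun a0 => c * f a0 + d * g a0)) with
    (fun a0 => c * Vpow S t f a0 + d * Vpow S t g a0).
  apply V_lin. apply functional_extensionality; intro; rewrite IHt; auto.
Qed.

Lemma Vpow_succ A (S : ips A) t f : Vpow S t (V S f) = Vpow S (Datatypes.S t) f.
Proof. induction t; simpl; auto. rewrite IHt; auto. Qed.

Lemma good_sum A (S : ips A) (F : nat -> A -> R) n :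
  (forall t, good S (F t)) -> good S (fun a => sum_f_R0 (fun t => F t a) n).
Proof.
  intros H; induction n; simpl.
  - replace (fun a => F 0%nat a) with (F 0%nat) by auto. auto.
  - apply good_add; auto.
Qed.

Lemma good_Av A (S : ips A) T f : good S f -> good S (Av S T f).
Proof.
  intros H. unfold Av.
  replace (fun a => sum_f_R0 (fun t => Vpow S t f a) T / INR (Datatypes.S T)) with
   (fun a => / INR (Datatypes.S T) * sum_f_R0 (fun t => Vpow S t f a) T).
  apply good_scal. apply good_sum. intros; apply good_Vpow; auto.
  apply functional_extensionality; intro; unfold Rdiv; ring.
Qed.

Lemma Q_exp A (S : ips A) f g c d : good S f -> good S g ->
  ip S (fun a => c * f a + d * g a) (fun a => c * f a + d * g a) =
  c * c * ip S f f + 2 * c * d * ip S f g + d * d * ip S g g.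
Proof.
  intros Hf Hg. assert (Hl : good S (fun a => c * f a + d * g a)) by (apply good_lin; auto).
  rewrite ip_lin; auto.
  rewrite (ip_sym _ S f), (ip_sym _ S g); auto.
  rewrite !ip_lin; auto. rewrite (ip_sym _ S g f); auto. ring.
Qed.

Lemma CS A (S : ips A) f g : good S f -> good S g ->
  ip S f g * ip S f g <= ip S f f * ip S g g.
Proof.
  intros Hf Hg.
  set (a := ip S f f). set (b := ip S f g). set (c := ip S g g).
  assert (H1 : forall x y, 0 <= x*x*a + 2*x*y*b + y*y*c).
  { intros x y. unfold a, b, c. rewrite <- Q_exp; auto. apply ip_pos. apply good_lin; auto. }
  assert (Ha : 0 <= a) by (apply ip_pos; auto).
  assert (Hc : 0 <= c) by (apply ip_pos; auto).
  destruct (Rle_lt_or_eq_dec 0 c Hc) as [Hc'|Hc'].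
  - specialize (H1 c (-b)).
    assert (0 <= c * (a*c - b*b)) by nra. nra.
  - destruct (Rle_lt_or_eq_dec 0 a Ha) as [Ha'|Ha'].
    + specialize (H1 (-b) a). assert (0 <= a * (a*c - b*b)) by nra. nra.
    + specialize (H1 b (-1)). rewrite <- Hc', <- Ha' in *. nra.
Qed.

Lemma nr_pos A (S : ips A) f : 0 <= nr S f.
Proof. apply sqrt_pos. Qed.

Lemma sqrt_le_aux x y : 0 <= y -> x <= y * y -> sqrt x <= y.
Proof. intros H1 H2. rewrite <- (sqrt_square y H1). apply sqrt_le_1_alt; auto. Qed.

Lemma nr_lin A (S : ips A) f g c d : good S f -> good S g ->
  nr S (fun a => c * f a + d * g a) <= Rabs c * nr S f + Rabs d * nr S g.
Proof.
  intros Hf Hg. unfold nr. rewrite Q_exp; auto.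
  assert (Ha : 0 <= ip S f f) by (apply ip_pos; auto).
  assert (Hc : 0 <= ip S g g) by (apply ip_pos; auto).
  pose proof (CS _ S f g Hf Hg) as Hcs.
  set (sa := sqrt (ip S f f)). set (sc := sqrt (ip S g g)).
  assert (E1 : sa * sa = ip S f f) by (apply sqrt_sqrt; auto).
  assert (E2 : sc * sc = ip S g g) by (apply sqrt_sqrt; auto).
  assert (P1 : 0 <= sa) by apply sqrt_pos. assert (P2 : 0 <= sc) by apply sqrt_pos.
  assert (Hb : Rabs (ip S f g) <= sa * sc).
  { assert (0 <= sa*sc) by nra.
    assert (Rsqr (ip S f g) <= Rsqr (sa*sc)) by (unfold Rsqr; nra).
    apply Rsqr_le_abs_0 in H0. rewrite (Rabs_pos_eq (sa*sc)) in H0; auto. }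
  apply sqrt_le_aux. apply Rplus_le_le_0_compat; apply Rmult_le_pos; try apply Rabs_pos; auto.
  rewrite <- E1, <- E2.
  assert (c*d*ip S f g <= Rabs c * Rabs d * (sa*sc)).
  { rewrite <- Rabs_mult. apply Rle_trans with (Rabs (c*d) * Rabs (ip S f g)).
    rewrite <- Rabs_mult. apply Rle_abs. apply Rmult_le_compat_l; auto. apply Rabs_pos. }
  assert (Rabs c * Rabs c = c * c). { rewrite <- Rabs_mult. apply Rabs_pos_eq. nra. }
  assert (Rabs d * Rabs d = d * d). { rewrite <- Rabs_mult. apply Rabs_pos_eq. nra. }
  nra.
Qed.

Lemma nr_ext A (S : ips A) f g : (forall a, f a = g a) -> nr S f = nr S g.
Proof. intros H. replace f with g; auto. apply functional_extensionality; auto. Qed.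

Lemma nr_add A (S : ips A) f g : good S f -> good S g ->
  nr S (fun a => f a + g a) <= nr S f + nr S g.
Proof. intros. rewrite (nr_ext _ S _ (fun a => 1 * f a + 1 * g a)) by (intro; ring).
  pose proof (nr_lin _ S f g 1 1 H H0). rewrite Rabs_R1 in H1. lra. Qed.

Lemma nr_sub_sym A (S : ips A) f g : good S f -> good S g ->
  nr S (fun a => f a - g a) = nr S (fun a => g a - f a).
Proof. intros. unfold nr.
  rewrite (functional_extensionality (fun a => f a - g a) (fun a => 1 * f a + (-1) * g a)) by (intro; ring).
  rewrite (functional_extensionality (fun a => g a - f a) (fun a => 1 * g a + (-1) * f a)) by (intro; ring).
  rewrite !Q_exp; auto. rewrite (ip_sym _ S g f); auto. f_equal. ring. Qed.

Lemma nr_tri A (S : ips A) f g h : good S f -> good S g -> good S h ->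
  nr S (fun a => f a - h a) <= nr S (fun a => f a - g a) + nr S (fun a => g a - h a).
Proof. intros. rewrite (nr_ext _ S _ (fun a => (f a - g a) + (g a - h a))) by (intro; ring).
  apply nr_add; apply good_sub; auto. Qed.

Lemma nr_V A (S : ips A) f : good S f -> nr S (V S f) = nr S f.
Proof. intros; unfold nr; rewrite V_iso; auto. Qed.

Lemma nr_Vpow A (S : ips A) t f : good S f -> nr S (Vpow S t f) = nr S f.
Proof. intros; induction t; simpl; auto. rewrite nr_V; auto. apply good_Vpow; auto. Qed.

Lemma INR_S_pos n : 0 < INR (Datatypes.S n).
Proof. apply lt_0_INR; lia. Qed.

Lemma Av_rec A (S : ips A) T f a :
  Av S (Datatypes.S T) f a =
  (INR (Datatypes.S T) / INR (Datatypes.S (Datatypes.S T))) * Av S T f a +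
  (1 - INR (Datatypes.S T) / INR (Datatypes.S (Datatypes.S T))) * Vpow S (Datatypes.S T) f a.
Proof.
  unfold Av. simpl sum_f_R0.
  pose proof (INR_S_pos T). pose proof (INR_S_pos (Datatypes.S T)).
  assert (INR (Datatypes.S (Datatypes.S T)) = INR (Datatypes.S T) + 1) by (rewrite S_INR; auto).
  rewrite H1. simpl Vpow. field. lra.
Qed.

Lemma frac_bounds T : 0 <= INR (Datatypes.S T) / INR (Datatypes.S (Datatypes.S T)) <= 1.
Proof.
  pose proof (INR_S_pos T).
  assert (INR (Datatypes.S (Datatypes.S T)) = INR (Datatypes.S T) + 1) by (rewrite S_INR; auto).
  rewrite H0. split. apply Rmult_le_pos; [lra|]. left; apply Rinv_0_lt_compat; lra.
  apply Rmult_le_reg_r with (INR (Datatypes.S T) + 1); [lra|].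
  unfold Rdiv. rewrite Rmult_assoc, Rinv_l by lra. lra.
Qed.

Lemma nr_cvx A (S : ips A) f g l : good S f -> good S g -> 0 <= l <= 1 ->
  nr S (fun a => l * f a + (1 - l) * g a) <= l * nr S f + (1 - l) * nr S g.
Proof. intros. pose proof (nr_lin _ S f g l (1-l) H H0).
  rewrite (Rabs_pos_eq l), (Rabs_pos_eq (1-l)) in H2 by lra. auto. Qed.

Lemma nr_Av A (S : ips A) T f : good S f -> nr S (Av S T f) <= nr S f.
Proof.
  intros Hf. induction T.
  - rewrite (nr_ext _ S _ f); [lra|]. intro; unfold Av; simpl. field.
  - rewrite (nr_ext _ S _ _ (Av_rec _ S T f)).
    pose proof (frac_bounds T).
    eapply Rle_trans. apply nr_cvx; auto. apply good_Av; auto. apply good_Vpow; auto.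
    rewrite nr_Vpow; auto. nra.
Qed.

Inductive Sn {A} (S : ips A) (x : A -> R) (n : nat) : (A -> R) -> Prop :=
| Sn_orb t : (t <= n)%nat -> Sn S x n (Vpow S t x)
| Sn_cvx f g l : 0 <= l <= 1 -> Sn S x n f -> Sn S x n g -> Sn S x n (fun a => l * f a + (1 - l) * g a).

Lemma Sn_good A (S : ips A) x n f : good S x -> Sn S x n f -> good S f.
Proof. intros Hx H; induction H. apply good_Vpow; auto. apply good_lin; auto. Qed.

Lemma Sn_mono A (S : ips A) x n m f : (n <= m)%nat -> Sn S x n f -> Sn S x m f.
Proof. intros Hm H; induction H. apply Sn_orb; lia. apply Sn_cvx; auto. Qed.

Lemma Sn_V A (S : ips A) x n f : Sn S x n f -> Sn S x (Datatypes.S n) (V S f).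
Proof. intros H; induction H.
  - apply (Sn_orb S x (Datatypes.S n) (Datatypes.S t)); lia.
  - replace (V S (fun a => l * f a + (1 - l) * g a)) with (fun a => l * V S f a + (1 - l) * V S g a).
    apply Sn_cvx; auto. apply functional_extensionality; intro; rewrite V_lin; auto.
Qed.

Lemma Sn_Vpow A (S : ips A) x n f t : Sn S x n f -> Sn S x (n + t) (Vpow S t f).
Proof. intros H; induction t; simpl. rewrite Nat.add_0_r; auto.
  rewrite Nat.add_succ_r. apply Sn_V; auto. Qed.

Lemma Sn_Av A (S : ips A) x n f T : Sn S x n f -> Sn S x (n + T) (Av S T f).
Proof.
  intros H. induction T.
  - replace (Av S 0 f) with f. rewrite Nat.add_0_r; auto.
    apply functional_extensionality; intro; unfold Av; simpl; field.
  - replace (Av S (Datatypes.S T) f) with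
      (fun a => (INR (Datatypes.S T) / INR (Datatypes.S (Datatypes.S T))) * Av S T f a +
        (1 - INR (Datatypes.S T) / INR (Datatypes.S (Datatypes.S T))) * Vpow S (Datatypes.S T) f a).
    apply Sn_cvx. apply frac_bounds. apply (Sn_mono _ _ _ (n+T)); auto; lia.
    apply Sn_Vpow; auto.
    apply functional_extensionality; intro; rewrite Av_rec; auto.
Qed.

Lemma sum_telescope (u : nat -> R) T :
  sum_f_R0 (fun t => u (Datatypes.S t) - u t) T = u (Datatypes.S T) - u 0%nat.
Proof. induction T; simpl; auto. rewrite IHT. ring. Qed.

Lemma Av_V_diff A (S : ips A) T g : good S g ->
  nr S (fun a => Av S T (V S g) a - Av S T g a) <= 2 * nr S g / INR (Datatypes.S T).
Proof.
  intros Hg. pose proof (INR_S_pos T).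
  rewrite (nr_ext _ S _ (fun a => (/ INR (Datatypes.S T)) * Vpow S (Datatypes.S T) g a + (- / INR (Datatypes.S T)) * g a)).
  - eapply Rle_trans. apply nr_lin; auto. apply good_Vpow; auto.
    rewrite nr_Vpow; auto. rewrite Rabs_Ropp, Rabs_pos_eq.
    unfold Rdiv; lra. left; apply Rinv_0_lt_compat; lra.
  - intro a. unfold Av. unfold Rdiv.
    assert (E: sum_f_R0 (fun t => Vpow S t (V S g) a) T - sum_f_R0 (fun t => Vpow S t g a) T
       = Vpow S (Datatypes.S T) g a - g a).
    { rewrite <- minus_sum. rewrite <- (sum_telescope (fun t => Vpow S t g a)).
      apply sum_eq. intros. rewrite Vpow_succ. auto. }
    transitivity ((sum_f_R0 (fun t => Vpow S t (V S g) a) T - sum_f_R0 (fun t => Vpow S t g a) T) * / INR (Datatypes.S T)).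
    ring. rewrite E. simpl Vpow at 1. ring_simplify. simpl. ring.
Qed.

Lemma sum_scal (F : nat -> R) c n : sum_f_R0 (fun t => c * F t) n = c * sum_f_R0 F n.
Proof. induction n; simpl; auto. rewrite IHn; ring. Qed.

Lemma Av_lin A (S : ips A) T f g c d a :
  Av S T (fun a => c * f a + d * g a) a = c * Av S T f a + d * Av S T g a.
Proof.
  unfold Av. rewrite (sum_eq _ (fun t => c * Vpow S t f a + d * Vpow S t g a)).
  rewrite sum_plus, !sum_scal. field. pose proof (INR_S_pos T); lra.
  intros; apply Vpow_lin.
Qed.

Lemma nr_zero A (S : ips A) f : good S f -> nr S (fun a => f a - f a) = 0.
Proof. intros. rewrite (nr_ext _ S _ (fun a => 0 * f a + 0 * f a)) by (intro; ring).
  unfold nr. rewrite ip_lin; auto. rewrite Rmult_0_l, Rplus_0_l. apply sqrt_0.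
  apply good_lin; auto. Qed.

Lemma Av_orb A (S : ips A) x T t : good S x ->
  nr S (fun a => Av S T (Vpow S t x) a - Av S T x a) <= 2 * INR t * nr S x / INR (Datatypes.S T).
Proof.
  intros Hx. pose proof (INR_S_pos T). induction t.
  - simpl Vpow. rewrite nr_zero. simpl. unfold Rdiv; lra. apply good_Av; auto.
  - eapply Rle_trans. apply (nr_tri _ S _ (Av S T (Vpow S t x))); apply good_Av; auto; apply good_Vpow; auto.
    pose proof (Av_V_diff _ S T (Vpow S t x) (good_Vpow _ S t x Hx)).
    simpl Vpow. rewrite nr_Vpow in H0 by auto. rewrite S_INR. unfold Rdiv in *. lra.
Qed.

Lemma Sn_bound A (S : ips A) x n f T : good S x -> Sn S x n f ->
  nr S (fun a => Av S T f a - Av S T x a) <= 2 * INR n * nr S x / INR (Datatypes.S T).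
Proof.
  intros Hx H. pose proof (INR_S_pos T). pose proof (nr_pos _ S x). induction H.
  - eapply Rle_trans. apply Av_orb; auto. apply le_INR in H.
    unfold Rdiv. apply Rmult_le_compat_r. left; apply Rinv_0_lt_compat; lra. nra.
  - assert (Gf : good S f) by (eapply Sn_good; [exact Hx| eauto]).
    assert (Gg : good S g) by (eapply Sn_good; [exact Hx| eauto]).
    rewrite (nr_ext _ S _ (fun a => l * (Av S T f a - Av S T x a) + (1 - l) * (Av S T g a - Av S T x a))).
    eapply Rle_trans. apply nr_cvx; auto; apply good_sub; apply good_Av; auto. nra.
    intro a. rewrite Av_lin. ring.
Qed.

Lemma parallelogram A (S : ips A) f g : good S f -> good S g ->
  ip S (fun a => f a - g a) (fun a => f a - g a) =
  2 * ip S f f + 2 * ip S g g - 4 * ip S (fun a => /2 * f a + (1 - /2) * g a) (fun a => /2 * f a + (1 - /2) * g a).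
Proof.
  intros. rewrite (functional_extensionality (fun a => f a - g a) (fun a => 1 * f a + (-1) * g a)) by (intro; ring).
  rewrite !Q_exp; auto. field.
Qed.

Lemma sqrt_lt_aux x y : 0 < y -> x < y * y -> sqrt x < y.
Proof. intros. destruct (Rle_or_lt 0 x).
  rewrite <- (sqrt_square y) by lra. apply sqrt_lt_1_alt; split; auto.
  rewrite sqrt_neg_0 by lra. lra. Qed.

Lemma avg_cauchy A (S : ips A) x : good S x -> forall eps, 0 < eps ->
  exists N, forall T U, (N <= T)%nat -> (N <= U)%nat ->
    nr S (fun a => Av S T x a - Av S U x a) < eps.
Proof.
  intros Hx eps Heps.
  set (E := fun r => exists n f, Sn S x n f /\ r = - nr S f).
  assert (HE : bound E).
  { exists 0. intros r [n [f [_ ->]]]. pose proof (nr_pos _ S f); lra. }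
  assert (HE2 : exists r, E r).
  { exists (- nr S x). exists 0%nat, x. split; auto. apply (Sn_orb S x 0 0); auto. }
  destruct (completeness E HE HE2) as [m [Hm1 Hm2]].
  set (d := - m).
  assert (Hd1 : forall n f, Sn S x n f -> d <= nr S f).
  { intros n f Hf. assert (E (- nr S f)) by (exists n, f; auto). apply Hm1 in H. unfold d; lra. }
  assert (Hd0 : 0 <= d).
  { pose proof (Hd1 0%nat x (Sn_orb S x 0 0 (le_n 0))). pose proof (nr_pos _ S x).
    apply Ropp_le_cancel. unfold d. rewrite Ropp_involutive.
    apply Hm2. intros r [n [f [_ ->]]]. pose proof (nr_pos _ S f); lra. }
  assert (Hd2 : forall del, 0 < del -> exists n f, Sn S x n f /\ nr S f < d + del).
  { intros del Hdel. apply NNPP. intro Hn.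
    assert (is_upper_bound E (m - del)).
    { intros r [n [f [Hf ->]]]. destruct (Rle_or_lt (d + del) (nr S f)). unfold d in *; lra.
      exfalso; apply Hn; exists n, f; auto. }
    apply Hm2 in H. lra. }
  set (del := Rmin 1 (eps * eps / (32 * (2 * d + 1)))).
  assert (Hdel : 0 < del).
  { unfold del. apply Rmin_pos. lra. apply Rdiv_lt_0_compat. nra. lra. }
  assert (Hdel1 : del <= 1) by apply Rmin_l.
  assert (Hdel2 : del * (32 * (2 * d + 1)) <= eps * eps).
  { pose proof (Rmin_r 1 (eps * eps / (32 * (2 * d + 1)))). fold del in H.
    apply Rmult_le_compat_r with (r := 32 * (2 * d + 1)) in H; [|lra].
    unfold Rdiv in H. rewrite Rmult_assoc, Rinv_l in H; lra. }
  destruct (Hd2 del Hdel) as [n [f [Hf Hfd]]].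
  assert (Gf : good S f) by (eapply Sn_good; eauto).
  set (M := nr S x).
  assert (HM : 0 <= M) by apply nr_pos.
  destruct (archimed_cor1 (eps / (8 * INR n * M + 1))) as [N [HN1 HN2]].
  { apply Rdiv_lt_0_compat; auto. pose proof (pos_INR n). nra. }
  exists N. intros T U HT HU.
  assert (side : forall T', (N <= T')%nat ->
     nr S (fun a => Av S T' f a - Av S T' x a) < eps / 4).
  { intros T' HT'. eapply Rle_lt_trans. apply Sn_bound; eauto.
    pose proof (pos_INR n). pose proof (INR_S_pos T').
    assert (INR N <= INR (Datatypes.S T')) by (apply le_INR; lia).
    assert (0 < INR N) by (apply lt_0_INR; lia).
    assert (/ INR (Datatypes.S T') <= / INR N) by (apply Rinv_le_contravar; lra).
    assert (0 < 8 * INR n * M + 1) by nra.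
    assert (/ INR N * (8 * INR n * M + 1) < eps).
    { apply Rmult_lt_reg_r with (r := / (8 * INR n * M + 1)).
      apply Rinv_0_lt_compat; lra. rewrite Rmult_assoc, Rinv_r by lra. lra. }
    unfold Rdiv. fold M.
    assert (2 * INR n * M * / INR (Datatypes.S T') <= 2 * INR n * M * / INR N).
    { apply Rmult_le_compat_l; auto. nra. }
    assert (0 <= / INR N) by (left; apply Rinv_0_lt_compat; auto).
    nra. }
  set (uT := Av S T f). set (uU := Av S U f).
  assert (GT : good S uT) by (apply good_Av; auto).
  assert (GU : good S uU) by (apply good_Av; auto).
  assert (ST : Sn S x (n + T) uT) by (apply Sn_Av; auto).
  assert (SU : Sn S x (n + U) uU) by (apply Sn_Av; auto).
  assert (Smid : Sn S x (n + T + U) (fun a => /2 * uT a + (1 - /2) * uU a)).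
  { apply Sn_cvx. lra. apply (Sn_mono _ _ _ (n+T)); auto; lia. apply (Sn_mono _ _ _ (n+U)); auto; lia. }
  assert (mid_ge := Hd1 _ _ Smid).
  assert (nT : nr S uT < d + del) by (eapply Rle_lt_trans; [apply nr_Av; auto| auto]).
  assert (nU : nr S uU < d + del) by (eapply Rle_lt_trans; [apply nr_Av; auto| auto]).
  assert (core : nr S (fun a => uT a - uU a) < eps / 2).
  { unfold nr at 1. apply sqrt_lt_aux. lra. rewrite parallelogram; auto.
    assert (QT : ip S uT uT < (d+del)*(d+del)).
    { pose proof (sqrt_sqrt (ip S uT uT) (ip_pos _ S uT GT)). unfold nr in nT.
      pose proof (sqrt_pos (ip S uT uT)). nra. }
    assert (QU : ip S uU uU < (d+del)*(d+del)).
    { pose proof (sqrt_sqrt (ip S uU uU) (ip_pos _ S uU GU)). unfold nr in nU.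
      pose proof (sqrt_pos (ip S uU uU)). nra. }
    assert (GM : good S (fun a => /2 * uT a + (1 - /2) * uU a)) by (apply good_lin; auto).
    assert (QM : d * d <= ip S (fun a => /2 * uT a + (1 - /2) * uU a) (fun a => /2 * uT a + (1 - /2) * uU a)).
    { pose proof (sqrt_sqrt _ (ip_pos _ S _ GM)). unfold nr in mid_ge. nra. }
    nra. }
  eapply Rle_lt_trans. apply (nr_tri _ S _ uT). apply good_Av; auto. auto. apply good_Av; auto.
  eapply Rle_lt_trans. apply Rplus_le_compat_l. apply (nr_tri _ S _ uU); auto. apply good_Av; auto.
  pose proof (side T HT). pose proof (side U HU).
  rewrite nr_sub_sym in H by (auto; apply good_Av; auto).
  fold uT in H. fold uU in H0. lra.
Qed.

Lemma V_scal A (S : ips A) f c a : V S (fun a => c * f a) a = c * V S f a.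
Proof. replace (fun a => c * f a) with (fun a => c * f a + 0 * f a).
  rewrite V_lin; ring. apply functional_extensionality; intro; ring. Qed.

Lemma V_sum A (S : ips A) (F : nat -> A -> R) n a :
  V S (fun a => sum_f_R0 (fun t => F t a) n) a = sum_f_R0 (fun t => V S (F t) a) n.
Proof.
  revert a; induction n; intro a; simpl.
  - replace (fun a => F 0%nat a) with (F 0%nat) by auto. auto.
  - replace (fun a => sum_f_R0 (fun t => F t a) n + F (Datatypes.S n) a) with
      (fun a => 1 * sum_f_R0 (fun t => F t a) n + 1 * F (Datatypes.S n) a)
      by (apply functional_extensionality; intro; ring).
    rewrite V_lin, IHn. ring.
Qed.

Lemma Av_V_pt A (S : ips A) T x a :
  V S (Av S T x) a = Av S T x a + (Vpow S (Datatypes.S T) x a - x a) / INR (Datatypes.S T).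
Proof.
  unfold Av. unfold Rdiv at 1.
  replace (fun a => sum_f_R0 (fun t => Vpow S t x a) T * / INR (Datatypes.S T)) with
    (fun a => / INR (Datatypes.S T) * sum_f_R0 (fun t => Vpow S t x a) T)
    by (apply functional_extensionality; intro; ring).
  rewrite V_scal, V_sum.
  rewrite (sum_eq (fun t => V S (Vpow S t x) a) (fun t => Vpow S (Datatypes.S t) x a)) by auto.
  assert (E : sum_f_R0 (fun t => Vpow S (Datatypes.S t) x a) T =
     sum_f_R0 (fun t => Vpow S t x a) T + (Vpow S (Datatypes.S T) x a - x a)).
  { rewrite <- (sum_telescope (fun t => Vpow S t x a)). rewrite <- sum_plus.
    apply sum_eq; intros; simpl; ring. }
  rewrite E. field. pose proof (INR_S_pos T); lra.
Qed.

Lemma coord_nr A (S : ips A) f a : good S f -> (forall g, good S g -> forall a, g a * g a <= ip S g g) ->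
  Rabs (f a) <= nr S f.
Proof. intros Hf Hc. unfold nr. rewrite <- sqrt_Rsqr_abs. apply sqrt_le_1_alt.
  unfold Rsqr; auto. Qed.

Lemma Av_cv A (S : ips A) x : good S x -> (forall g, good S g -> forall a, g a * g a <= ip S g g) ->
  forall a, { l | Un_cv (fun T => Av S T x a) l }.
Proof.
  intros Hx Hc a. apply R_complete. intros eps Heps.
  destruct (avg_cauchy A S x Hx eps Heps) as [N HN]. exists N. intros n m Hn Hm.
  unfold R_dist. eapply Rle_lt_trans; [|apply (HN n m Hn Hm)].
  apply (coord_nr _ S (fun a => Av S n x a - Av S m x a)); auto.
  apply good_sub; apply good_Av; auto.
Qed.

Lemma Av_V_cv A (S : ips A) x l a : good S x -> (forall g, good S g -> forall a, g a * g a <= ip S g g) ->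
  Un_cv (fun T => Av S T x a) l -> Un_cv (fun T => V S (Av S T x) a) l.
Proof.
  intros Hx Hc Hl. 
  assert (Un_cv (fun T => (Vpow S (Datatypes.S T) x a - x a) / INR (Datatypes.S T)) 0).
  { intros eps Heps. set (M := nr S x).
    destruct (archimed_cor1 (eps / (2 * M + 1))) as [N [HN1 HN2]].
    { apply Rdiv_lt_0_compat; auto. pose proof (nr_pos _ S x). fold M in H. lra. }
    exists N. intros n Hn. unfold R_dist. rewrite Rminus_0_r.
    pose proof (coord_nr _ S (Vpow S (Datatypes.S n) x) a (good_Vpow _ S _ _ Hx) Hc).
    rewrite nr_Vpow in H by auto. pose proof (coord_nr _ S x a Hx Hc). fold M in H, H0.
    pose proof (INR_S_pos n).
    assert (INR N <= INR (Datatypes.S n)) by (apply le_INR; lia).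
    assert (0 < INR N) by (apply lt_0_INR; lia).
    unfold Rdiv. rewrite Rabs_mult. rewrite (Rabs_pos_eq (/ _)) by (left; apply Rinv_0_lt_compat; lra).
    assert (Rabs (Vpow S (Datatypes.S n) x a - x a) <= 2 * M).
    { eapply Rle_trans. apply Rabs_triang. rewrite Rabs_Ropp. lra. }
    assert (/ INR (Datatypes.S n) <= / INR N) by (apply Rinv_le_contravar; lra).
    assert (0 <= M) by apply nr_pos.
    assert (/ INR N * (2 * M + 1) < eps).
    { apply Rmult_lt_reg_r with (r := / (2 * M + 1)). apply Rinv_0_lt_compat; lra.
      rewrite Rmult_assoc, Rinv_r by lra. unfold Rdiv in HN1. lra. }
    assert (0 <= / INR (Datatypes.S n)) by (left; apply Rinv_0_lt_compat; lra).
    assert (0 <= / INR N) by (left; apply Rinv_0_lt_compat; lra).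
    nra. }
  pose proof (CV_plus _ _ _ _ Hl H). rewrite Rplus_0_r in H0.
  intros eps Heps. destruct (H0 eps Heps) as [N HN]. exists N. intros n Hn.
  rewrite Av_V_pt. apply HN; auto.
Qed.

Definition ipsK {A} (sumK : (A -> R) -> R)
  (Hlin : forall F G c d, sumK (fun a => c * F a + d * G a) = c * sumK F + d * sumK G)
  (Hpos : forall F, (forall a, 0 <= F a) -> 0 <= sumK F) : ips A.
Proof.
  refine (mkIPS A (fun _ => True) (fun f g => sumK (fun a => f a * g a)) (fun f => f)
     (fun _ _ _ _ _ _ => I) (fun _ H => H) (fun _ _ _ _ _ => eq_refl) _ _ _ (fun _ _ => eq_refl)).
  - intros f g _ _. f_equal. apply functional_extensionality; intro; ring.
  - intros f g h c d _ _ _. rewrite <- Hlin. f_equal. apply functional_extensionality; intro; ring.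
  - intros f _. apply Hpos. intro; nra.
Defined.

Definition lev (e : arc) : nat := match e with Rt k => k | Lf k => k end.
Definition sumA (K : nat) (F : arc -> R) : R := sum_f_R0 (fun k => F (Rt k) + F (Lf k)) K.
Definition suppA (K : nat) (F : arc -> R) : Prop := forall e, (K < lev e)%nat -> F e = 0.

Lemma sumA_ext K K' F : suppA K F -> (K <= K')%nat -> sumA K' F = sumA K F.
Proof.
  intros H HK. induction HK; auto. unfold sumA in *. simpl. rewrite IHHK.
  rewrite (H (Rt (S m))), (H (Lf (S m))) by (simpl; lia). ring.
Qed.

Definition sumL (F : arc -> R) : R := Rbar.real (Lim_seq.Lim_seq (fun K => sumA K F)).

Lemma sumL_eq K F : suppA K F -> sumL F = sumA K F.
Proof.
  intros H. unfold sumL.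
  rewrite (Lim_seq.Lim_seq_ext_loc _ (fun _ => sumA K F)).
  rewrite Lim_seq.Lim_seq_const. reflexivity.
  exists K. intros n Hn. apply sumA_ext; auto.
Qed.

Lemma sumA_lin K F G c d : sumA K (fun e => c * F e + d * G e) = c * sumA K F + d * sumA K G.
Proof. unfold sumA; induction K; simpl. ring. rewrite IHK. ring. Qed.

Lemma sumA_nonneg K F : (forall e, 0 <= F e) -> 0 <= sumA K F.
Proof. intros H; unfold sumA; induction K; simpl.
  pose proof (H (Rt 0)); pose proof (H (Lf 0)); lra.
  pose proof (H (Rt (S K))); pose proof (H (Lf (S K))); lra. Qed.

Lemma sumA_mono K K' F : (forall e, 0 <= F e) -> (K <= K')%nat -> sumA K F <= sumA K' F.
Proof. intros H HK; induction HK. lra. unfold sumA in *; simpl.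
  pose proof (H (Rt (S m))); pose proof (H (Lf (S m))); lra. Qed.

Lemma sumA_term K F e : (forall e, 0 <= F e) -> (lev e <= K)%nat -> F e <= sumA K F.
Proof.
  intros H He. eapply Rle_trans; [|apply (sumA_mono (lev e)); auto].
  destruct e as [k|k]; simpl; unfold sumA; destruct k; simpl;
  try (pose proof (H (Rt 0)); pose proof (H (Lf 0)); lra);
  pose proof (sumA_nonneg k F H); unfold sumA in H0;
  pose proof (H (Rt (S k))); pose proof (H (Lf (S k))); lra.
Qed.

Definition good1 (f : arc -> R) : Prop := exists K, suppA K f.
Definition ip1 (f g : arc -> R) : R := sumL (fun e => f e * g e).

Lemma suppA_mono K K' f : suppA K f -> (K <= K')%nat -> suppA K' f.
Proof. intros H HK e He. apply H; lia. Qed.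

Lemma suppA_prod K f g : suppA K f -> suppA K (fun e => f e * g e).
Proof. intros H e He. rewrite H; auto; ring. Qed.

Lemma ip1_eq K f g : suppA K f -> ip1 f g = sumA K (fun e => f e * g e).
Proof. intros H. unfold ip1. apply sumL_eq. apply suppA_prod; auto. Qed.

(* the real shadow of the walk operator *)
Definition ipar (p q : nat -> R) (j : nat) (h : arc -> R) : R :=
  match j with
  | O => sqrt (p 0%nat) * h (Rt 0)
  | S k => sqrt (q j) * h (Lf k) + sqrt (p j) * h (Rt j)
  end.
Definition projAr (p q : nat -> R) (h : arc -> R) (e : arc) : R :=
  match e with
  | Rt j => sqrt (p j) * ipar p q j h
  | Lf j => sqrt (q (S j)) * ipar p q (S j) h
  end.
Definition coinr p q (h : arc -> R) (e : arc) : R := 2 * projAr p q h e - h e.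
Definition Ur p q (h : arc -> R) (e : arc) : R := coinr p q h (swap e).

Lemma Ur_re p q (psi : state) e : re (Uop p q psi e) = Ur p q (fun a => re (psi a)) e.
Proof. destruct e as [j|j]; [|destruct j]; reflexivity. Qed.
Lemma Ur_im p q (psi : state) e : im (Uop p q psi e) = Ur p q (fun a => im (psi a)) e.
Proof. destruct e as [j|j]; [|destruct j]; reflexivity. Qed.

Fixpoint Urpow p q (t : nat) (h : arc -> R) : arc -> R :=
  match t with O => h | S t' => Ur p q (Urpow p q t' h) end.

Lemma Upow_re p q t (psi : state) e : re (Upow p q t psi e) = Urpow p q t (fun a => re (psi a)) e.
Proof. revert e; induction t; intro e; cbn [Upow Urpow]; auto. rewrite Ur_re.
  f_equal. apply functional_extensionality; auto. Qed.
Lemma Upow_im p q t (psi : state) e : im (Upow p q t psi e) = Urpow p q t (fun a => im (psi a)) e.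
Proof. revert e; induction t; intro e; cbn [Upow Urpow]; auto. rewrite Ur_im.
  f_equal. apply functional_extensionality; auto. Qed.

Lemma Ur_lin p q f g c d e : Ur p q (fun a => c * f a + d * g a) e = c * Ur p q f e + d * Ur p q g e.
Proof. destruct e as [j|j]; [|destruct j]; unfold Ur, coinr, projAr, ipar; simpl; ring. Qed.

Lemma Ur_supp p q K f : suppA K f -> suppA (S K) (Ur p q f).
Proof.
  intros H e He. destruct e as [j|j]; simpl in He; unfold Ur, coinr, projAr, ipar; simpl.
  - rewrite (H (Lf j)), (H (Rt (S j))) by (simpl; lia). ring.
  - destruct j. lia. rewrite (H (Lf j)), (H (Rt (S j))) by (simpl; lia). ring.
Qed.

Record hyp (p q : nat -> R) : Prop := {
  hp0 : forall k, 0 <= p k; hq0 : forall k, 0 <= q k; hpq : forall k, p k + q k = 1;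
  hq_0 : q 0%nat = 0; hp_pos : forall k, 0 < p k; hq_pos : forall k, 0 < q (S k) }.

Lemma sp2 p q (H : hyp p q) k : sqrt (p k) * sqrt (p k) = p k.
Proof. apply sqrt_sqrt, (hp0 _ _ H). Qed.
Lemma sq2 p q (H : hyp p q) k : sqrt (q k) * sqrt (q k) = q k.
Proof. apply sqrt_sqrt, (hq0 _ _ H). Qed.
Lemma sp_0 p q (H : hyp p q) : sqrt (p 0%nat) = 1.
Proof. assert (p 0%nat = 1) by (pose proof (hpq _ _ H 0); rewrite (hq_0 _ _ H) in H0; lra).
  rewrite H0; apply sqrt_1. Qed.

Lemma vertex_id a b x y x' y' :
  a * a + b * b = 1 ->
  (2 * (b * (b * y + a * x)) - y) * (2 * (b * (b * y' + a * x')) - y') +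
  (2 * (a * (b * y + a * x)) - x) * (2 * (a * (b * y' + a * x')) - x') = y * y' + x * x'.
Proof. intros H.
  transitivity (4 * (a*a+b*b - 1) * (b*y + a*x) * (b*y'+a*x') + (y * y' + x * x')). ring.
  rewrite H. ring. Qed.

Lemma iso_id p q (H : hyp p q) f g K :
  sumA K (fun e => Ur p q f e * Ur p q g e) + f (Lf K) * g (Lf K) =
  sumA K (fun e => f e * g e) + Ur p q f (Rt K) * Ur p q g (Rt K).
Proof.
  induction K.
  - unfold sumA; simpl. unfold Ur, coinr, projAr, ipar; simpl. rewrite (sp_0 _ _ H). ring.
  - unfold sumA in *; simpl. 
    assert (V : Ur p q f (Rt K) * Ur p q g (Rt K) + Ur p q f (Lf (S K)) * Ur p q g (Lf (S K))
       = f (Lf K) * g (Lf K) + f (Rt (S K)) * g (Rt (S K))).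
    { unfold Ur, coinr, projAr, ipar; simpl. apply vertex_id.
      rewrite (sp2 _ _ H), (sq2 _ _ H). pose proof (hpq _ _ H (S K)); lra. }
    lra.
Qed.

Lemma iso_sum p q (H : hyp p q) f g K K' : suppA K f -> suppA K g -> (K < K')%nat ->
  sumA K' (fun e => Ur p q f e * Ur p q g e) = sumA K' (fun e => f e * g e).
Proof.
  intros Hf Hg HK. pose proof (iso_id p q H f g K').
  rewrite (Hf (Lf K')) in H0 by (simpl; lia).
  assert (Ur p q f (Rt K') = 0).
  { unfold Ur, coinr, projAr, ipar; simpl. rewrite (Hf (Lf K')), (Hf (Rt (S K'))) by (simpl; lia). ring. }
  rewrite H1 in H0. lra.
Qed.

Definition Ws p q (s : R) (f : arc -> R) (e : arc) : R := s * Ur p q f e.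

Lemma good1_lin f g c d : good1 f -> good1 g -> good1 (fun a => c * f a + d * g a).
Proof. intros [K1 H1] [K2 H2]. exists (max K1 K2). intros e He.
  rewrite H1, H2 by lia. ring. Qed.

Lemma ip1_sym f g : ip1 f g = ip1 g f.
Proof. unfold ip1. f_equal. apply functional_extensionality; intro; ring. Qed.

Lemma ip1_lin f g h c d : good1 f -> good1 g -> good1 h ->
  ip1 (fun a => c * f a + d * g a) h = c * ip1 f h + d * ip1 g h.
Proof. intros [K1 H1] [K2 H2] _.
  assert (S1 : suppA (max K1 K2) f) by (apply (suppA_mono K1); auto; lia).
  assert (S2 : suppA (max K1 K2) g) by (apply (suppA_mono K2); auto; lia).
  rewrite (ip1_eq (max K1 K2)), (ip1_eq (max K1 K2) f), (ip1_eq (max K1 K2) g); auto.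
  rewrite <- sumA_lin. f_equal. apply functional_extensionality; intro; ring.
  intros e He. rewrite S1, S2 by auto. ring.
Qed.

Lemma ip1_pos f : good1 f -> 0 <= ip1 f f.
Proof. intros [K H1]. rewrite (ip1_eq K); auto. apply sumA_nonneg. intro; nra. Qed.

Lemma Ws_iso p q s (H : hyp p q) (Hs : s * s = 1) f : good1 f -> ip1 (Ws p q s f) (Ws p q s f) = ip1 f f.
Proof.
  intros [K HK]. assert (HW : suppA (S K) (Ws p q s f)).
  { intros e He. unfold Ws. rewrite (Ur_supp p q K f HK); auto; ring. }
  rewrite (ip1_eq (S K)), (ip1_eq (S K) f); auto. 2: apply (suppA_mono K); auto.
  rewrite <- (iso_sum p q H f f K (S K)); auto.
  f_equal. apply functional_extensionality; intro. unfold Ws.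
  transitivity ((s * s) * (Ur p q f x * Ur p q f x)). ring. rewrite Hs; ring.
Qed.

Definition ips1 p q s (H : hyp p q) (Hs : s * s = 1) : ips arc.
Proof.
  refine (mkIPS arc good1 ip1 (Ws p q s) good1_lin _ _ (fun f g _ _ => ip1_sym f g) ip1_lin ip1_pos (Ws_iso p q s H Hs)).
  - intros f [K HK]. exists (S K). intros e He. unfold Ws. rewrite (Ur_supp p q K f HK); auto; ring.
  - intros f g c d a. unfold Ws. rewrite Ur_lin. ring.
Defined.

Lemma sumA_fext K F G : (forall e, F e = G e) -> sumA K F = sumA K G.
Proof. intros H. f_equal. apply functional_extensionality; auto. Qed.

Lemma sumA_plus K F G : sumA K (fun e => F e + G e) = sumA K F + sumA K G.
Proof. unfold sumA; induction K; simpl. ring. rewrite IHK. ring. Qed.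

Lemma sumA_swap K K' (P : arc -> arc -> R) :
  sumA K (fun e => sumA K' (fun e' => P e e')) = sumA K' (fun e' => sumA K (fun e => P e e')).
Proof.
  induction K.
  - unfold sumA at 1; simpl. rewrite <- sumA_plus. apply sumA_fext; intro; unfold sumA; simpl; auto.
  - unfold sumA at 1; simpl. fold (sumA K (fun e => sumA K' (fun e' => P e e'))).
    rewrite IHK. rewrite <- !sumA_plus. apply sumA_fext; intro. unfold sumA; simpl. ring.
Qed.

Definition sumA2 (K : nat) (P : arc * arc -> R) : R := sumA K (fun e => sumA K (fun e' => P (e, e'))).
Definition suppA2 (K : nat) (P : arc * arc -> R) : Prop :=
  forall e e', ((K < lev e)%nat \/ (K < lev e')%nat) -> P (e, e') = 0.

Lemma sumA2_ext K K' P : suppA2 K P -> (K <= K')%nat -> sumA2 K' P = sumA2 K P.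
Proof.
  intros H HK. unfold sumA2.
  rewrite (sumA_fext K' _ (fun e => sumA K (fun e' => P (e, e')))).
  apply sumA_ext; auto.
  - intros e He. unfold sumA. transitivity (sum_f_R0 (fun _ => 0) K).
    apply sum_eq; intros. rewrite !H by auto. ring.
    clear; induction K; simpl; try rewrite IHK; ring.
  - intro e. apply sumA_ext; auto. intros e' He'. apply H; auto.
Qed.

Definition sumL2 (P : arc * arc -> R) : R := Rbar.real (Lim_seq.Lim_seq (fun K => sumA2 K P)).
Lemma sumL2_eq K P : suppA2 K P -> sumL2 P = sumA2 K P.
Proof.
  intros H. unfold sumL2.
  rewrite (Lim_seq.Lim_seq_ext_loc _ (fun _ => sumA2 K P)).
  rewrite Lim_seq.Lim_seq_const. reflexivity.
  exists K. intros n Hn. apply sumA2_ext; auto.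
Qed.

Definition good2 (F : arc * arc -> R) : Prop := exists K, suppA2 K F.
Definition ip2 (F G : arc * arc -> R) : R := sumL2 (fun x => F x * G x).

Lemma suppA2_mono K K' f : suppA2 K f -> (K <= K')%nat -> suppA2 K' f.
Proof. intros H HK e e' He. apply H; lia. Qed.
Lemma ip2_eq K f g : suppA2 K f -> ip2 f g = sumA2 K (fun x => f x * g x).
Proof. intros H. unfold ip2. apply sumL2_eq. intros e e' He. rewrite H; auto; ring. Qed.

Lemma sumA2_lin K F G c d : sumA2 K (fun x => c * F x + d * G x) = c * sumA2 K F + d * sumA2 K G.
Proof. unfold sumA2. rewrite <- sumA_lin. apply sumA_fext; intro. apply sumA_lin. Qed.

Lemma good2_lin f g c d : good2 f -> good2 g -> good2 (fun a => c * f a + d * g a).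
Proof. intros [K1 H1] [K2 H2]. exists (max K1 K2). intros e e' He.
  rewrite H1, H2 by lia. ring. Qed.

Lemma ip2_sym f g : ip2 f g = ip2 g f.
Proof. unfold ip2. f_equal. apply functional_extensionality; intro; ring. Qed.

Lemma ip2_lin f g h c d : good2 f -> good2 g -> good2 h ->
  ip2 (fun a => c * f a + d * g a) h = c * ip2 f h + d * ip2 g h.
Proof. intros [K1 H1] [K2 H2] _.
  assert (S1 : suppA2 (max K1 K2) f) by (apply (suppA2_mono K1); auto; lia).
  assert (S2 : suppA2 (max K1 K2) g) by (apply (suppA2_mono K2); auto; lia).
  rewrite (ip2_eq (max K1 K2)), (ip2_eq (max K1 K2) f), (ip2_eq (max K1 K2) g); auto.
  rewrite <- sumA2_lin. f_equal. apply functional_extensionality; intro; ring.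
  intros e e' He. rewrite S1, S2 by auto. ring.
Qed.

Lemma sumA2_nonneg K F : (forall x, 0 <= F x) -> 0 <= sumA2 K F.
Proof. intros H. apply sumA_nonneg. intro. apply sumA_nonneg; auto. Qed.

Lemma ip2_pos f : good2 f -> 0 <= ip2 f f.
Proof. intros [K H1]. rewrite (ip2_eq K); auto. apply sumA2_nonneg. intro; nra. Qed.

Definition T2 p q (F : arc * arc -> R) (x : arc * arc) : R :=
  Ur p q (fun f => Ur p q (fun f' => F (f, f')) (snd x)) (fst x).

Lemma Ur_zero p q h e : (forall a, h a = 0) -> Ur p q h e = 0.
Proof. intros H. replace h with (fun _ : arc => 0).
  destruct e as [j|j]; [|destruct j]; unfold Ur, coinr, projAr, ipar; simpl; ring.
  apply functional_extensionality; intro; auto. Qed.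

Lemma T2_supp p q K F : suppA2 K F -> suppA2 (S K) (T2 p q F).
Proof.
  intros H e e' He. unfold T2; simpl. destruct He as [He|He].
  - apply (Ur_supp p q K); auto. intros f Hf. apply Ur_zero. intro; apply H; auto.
  - apply Ur_zero. intro f. apply (Ur_supp p q K); auto. intros f' Hf'. apply H; auto.
Qed.

Lemma T2_lin p q f g c d a : T2 p q (fun a => c * f a + d * g a) a = c * T2 p q f a + d * T2 p q g a.
Proof. unfold T2.
  rewrite (functional_extensionality (fun f0 => Ur p q (fun f' => c * f (f0, f') + d * g (f0, f')) (snd a))
    (fun f0 => c * Ur p q (fun f' => f (f0, f')) (snd a) + d * Ur p q (fun f' => g (f0, f')) (snd a))).
  apply Ur_lin. intro; apply Ur_lin. Qed.

Lemma T2_iso p q (H : hyp p q) F : good2 F -> ip2 (T2 p q F) (T2 p q F) = ip2 F F.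
Proof.
  intros [K HK].
  rewrite (ip2_eq (S (S K))), (ip2_eq (S (S K)) F).
  2: apply (suppA2_mono K); auto. 2: apply (suppA2_mono (S K)); [apply T2_supp; auto| lia].
  set (K' := S (S K)).
  unfold sumA2, T2; simpl.
  rewrite sumA_swap.
  rewrite (sumA_fext K' _ (fun e' => sumA K' (fun f => Ur p q (fun f' => F (f, f')) e' * Ur p q (fun f' => F (f, f')) e'))).
  rewrite sumA_swap. apply sumA_fext; intro f.
  apply (iso_sum p q H _ _ K); try (unfold K'; lia); intros f' Hf'; apply HK; auto.
  intro e'. apply (iso_sum p q H _ _ K); try (unfold K'; lia); intros f Hf; apply Ur_zero; intro; apply HK; auto.
Qed.

Definition ips2 p q (H : hyp p q) : ips (arc * arc).
Proof.
  refine (mkIPS (arc * arc) good2 ip2 (T2 p q) good2_lin _ (T2_lin p q) (fun f g _ _ => ip2_sym f g) ip2_lin ip2_pos (T2_iso p q H)).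
  intros f [K HK]. exists (S K). apply T2_supp; auto.
Defined.

Lemma coord1 f e : good1 f -> f e * f e <= ip1 f f.
Proof. intros [K HK]. rewrite (ip1_eq (max K (lev e))) by (apply (suppA_mono K); auto; lia).
  apply (sumA_term _ (fun e => f e * f e)). intro; nra. lia. Qed.

Lemma coord2 F x : good2 F -> F x * F x <= ip2 F F.
Proof. intros [K HK]. destruct x as [e e'].
  set (K' := max K (max (lev e) (lev e'))).
  rewrite (ip2_eq K') by (apply (suppA2_mono K); auto; unfold K'; lia).
  unfold sumA2. eapply Rle_trans; [|apply (sumA_term _ (fun e0 => sumA K' (fun e'0 => F (e0, e'0) * F (e0, e'0))) e)].
  apply (sumA_term _ (fun e'0 => F (e, e'0) * F (e, e'0))). intro; nra. unfold K'; lia.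
  intro; apply sumA_nonneg; intro; nra. unfold K'; lia.
Qed.

Lemma Ur_scal p q f c e : Ur p q (fun a => c * f a) e = c * Ur p q f e.
Proof. destruct e as [j|j]; [|destruct j]; unfold Ur, coinr, projAr, ipar; simpl; ring. Qed.
Lemma Ur_scal_r p q f c e : Ur p q (fun a => f a * c) e = Ur p q f e * c.
Proof. destruct e as [j|j]; [|destruct j]; unfold Ur, coinr, projAr, ipar; simpl; ring. Qed.

Lemma Vpow1 p q s H Hs t f a : Vpow (ips1 p q s H Hs) t f a = s ^ t * Urpow p q t f a.
Proof.
  revert a; induction t; intro a; simpl. ring.
  unfold Ws. replace (Vpow (ips1 p q s H Hs) t f) with (fun a => s ^ t * Urpow p q t f a)
    by (apply functional_extensionality; intro; rewrite IHt; auto).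
  rewrite Ur_scal. ring.
Qed.

Lemma Vpow2 p q H t f x :
  Vpow (ips2 p q H) t (fun x => f (fst x) * f (snd x)) x = Urpow p q t f (fst x) * Urpow p q t f (snd x).
Proof.
  revert x; induction t; intro x; simpl. auto.
  replace (Vpow (ips2 p q H) t (fun x => f (fst x) * f (snd x))) with
    (fun x => Urpow p q t f (fst x) * Urpow p q t f (snd x))
    by (apply functional_extensionality; intro; rewrite IHt; auto).
  unfold T2. simpl.
  replace (fun f0 => Ur p q (fun f' => Urpow p q t f f0 * Urpow p q t f f') (snd x)) with
    (fun f0 => Urpow p q t f f0 * Ur p q (Urpow p q t f) (snd x)).
  apply Ur_scal_r. apply functional_extensionality; intro. rewrite Ur_scal; auto.
Qed.

(* Stationary vectors *)
#[local] Arguments wgt : simpl never.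
Definition mw p q k := wgt p q k.
Definition psi p q (s : R) (e : arc) : R :=
  match e with
  | Rt k => s ^ k * (sqrt (wgt p q k) * sqrt (p k))
  | Lf k => s ^ (S k) * (sqrt (wgt p q k) * sqrt (p k))
  end.

Lemma wgt_pos p q (H : hyp p q) k : 0 < wgt p q k.
Proof. induction k. change (0 < 1); lra. change (wgt p q (S k)) with (wgt p q k * p k / q (S k)). unfold Rdiv. apply Rmult_lt_0_compat.
  apply Rmult_lt_0_compat; auto. apply (hp_pos _ _ H). apply Rinv_0_lt_compat, (hq_pos _ _ H). Qed.

Lemma wgt_rel p q (H : hyp p q) k : wgt p q (S k) * q (S k) = wgt p q k * p k.
Proof. change (wgt p q (S k)) with (wgt p q k * p k / q (S k)). field. pose proof (hq_pos _ _ H k); lra. Qed.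

Lemma sqrt_rel p q (H : hyp p q) k :
  sqrt (wgt p q k) * sqrt (p k) = sqrt (wgt p q (S k)) * sqrt (q (S k)).
Proof.
  pose proof (wgt_pos p q H k). pose proof (wgt_pos p q H (S k)).
  rewrite <- !sqrt_mult; try lra; try apply (hp0 _ _ H); try apply (hq0 _ _ H).
  rewrite wgt_rel; auto.
Qed.

Lemma psi_fix p q (H : hyp p q) s (Hs : s * s = 1) e : s * Ur p q (psi p q s) e = psi p q s e.
Proof.
  pose proof (sp2 p q H) as SP. pose proof (sq2 p q H) as SQ. pose proof (hpq p q H) as PQ.
  destruct e as [k|k]; unfold Ur, coinr, projAr, ipar, psi, swap.
  - rewrite !(sqrt_rel p q H k).
    transitivity (s * s * (s ^ k * (sqrt (wgt p q (S k)) * sqrt (q (S k)))) *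
      (2 * (sqrt (q (S k)) * sqrt (q (S k)) + sqrt (p (S k)) * sqrt (p (S k))) - 1)). simpl; ring.
    rewrite Hs, SP, SQ. rewrite (Rplus_comm (q _)), PQ. ring.
  - destruct k.
    + rewrite (sp_0 p q H). simpl; ring.
    + rewrite !(sqrt_rel p q H k).
      transitivity (s * (s ^ S k * (sqrt (wgt p q (S k)) * sqrt (p (S k)))) *
      (2 * (sqrt (q (S k)) * sqrt (q (S k)) + sqrt (p (S k)) * sqrt (p (S k))) - 1)). simpl; ring.
      rewrite SP, SQ. rewrite (Rplus_comm (q _)), PQ. simpl; ring.
Qed.

Lemma sqrt_pos_lt x : 0 < x -> 0 < sqrt x.
Proof. apply sqrt_lt_R0. Qed.

Lemma fix_zero p q (H : hyp p q) s (Hs : s * s = 1) g :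
  (forall e, s * Ur p q g e = g e) -> g (Rt 0) = 0 -> forall k, g (Rt k) = 0 /\ g (Lf k) = 0.
Proof.
  intros Hf H0. induction k.
  - split; auto. rewrite <- (Hf (Lf 0)). unfold Ur, coinr, projAr, ipar, swap. rewrite H0. ring.
  - destruct IHk as [H1 H2].
    assert (E1 := Hf (Rt k)). unfold Ur, coinr, projAr, ipar, swap in E1. rewrite H1, H2 in E1.
    assert (P1 : 0 < sqrt (q (S k))) by (apply sqrt_pos_lt, (hq_pos _ _ H)).
    assert (P2 : 0 < sqrt (p (S k))) by (apply sqrt_pos_lt, (hp_pos _ _ H)).
    assert (Hr : g (Rt (S k)) = 0).
    { assert (s * (2 * (sqrt (q (S k)) * sqrt (p (S k)))) * g (Rt (S k)) = 0) by (rewrite <- E1; ring).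
      apply Rmult_integral in H3. destruct H3; auto. exfalso.
      apply Rmult_integral in H3. destruct H3. subst; lra. nra. }
    split; auto. rewrite <- (Hf (Lf (S k))). unfold Ur, coinr, projAr, ipar, swap. rewrite H2, Hr. ring.
Qed.

Lemma psi_Rt0 p q (H : hyp p q) s : psi p q s (Rt 0) = 1.
Proof. unfold psi. rewrite (sp_0 p q H). change (wgt p q 0) with 1. rewrite sqrt_1. simpl; ring. Qed.

Lemma fix_unique p q (H : hyp p q) s (Hs : s * s = 1) h :
  (forall e, s * Ur p q h e = h e) -> forall e, h e = h (Rt 0) * psi p q s e.
Proof.
  intros Hf. set (g := fun e => 1 * h e + (- h (Rt 0)) * psi p q s e).
  assert (Hg : forall e, s * Ur p q g e = g e).
  { intro e. unfold g. rewrite Ur_lin. transitivity (1 * (s * Ur p q h e) + (- h (Rt 0)) * (s * Ur p q (psi p q s) e)). ring. rewrite Hf, psi_fix; auto. }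
  assert (G0 : g (Rt 0) = 0) by (unfold g; rewrite psi_Rt0; auto; ring).
  intro e. pose proof (fix_zero p q H s Hs g Hg G0).
  destruct e as [k|k]; destruct (H0 k); unfold g in *; lra.
Qed.

Lemma Ur_cv p q (F : nat -> arc -> R) G e :
  (forall a, Un_cv (fun n => F n a) (G a)) -> Un_cv (fun n => Ur p q (F n) e) (Ur p q G e).
Proof.
  intros H. assert (C : forall c, Un_cv (fun _ : nat => c) c).
  { intros c eps Heps. exists 0%nat. intros. unfold R_dist. rewrite Rminus_diag, Rabs_R0; auto. }
  destruct e as [k|k]; [|destruct k]; unfold Ur, coinr, projAr, ipar, swap;
  repeat first [ apply CV_minus | apply CV_plus | apply CV_mult | apply C | apply H ].
Qed.

Lemma spow_sq s k : s * s = 1 -> s ^ k * s ^ k = 1.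
Proof. intros Hs. rewrite <- Rpow_mult_distr, Hs. apply pow1. Qed.

Lemma psi_sq_Rt p q (H : hyp p q) s (Hs : s * s = 1) k :
  psi p q s (Rt k) * psi p q s (Rt k) = wgt p q k * p k.
Proof. unfold psi. pose proof (spow_sq s k Hs). pose proof (wgt_pos p q H k).
  transitivity ((s^k*s^k) * (sqrt (wgt p q k) * sqrt (wgt p q k)) * (sqrt (p k) * sqrt (p k))). ring.
  rewrite H0, sqrt_sqrt, (sp2 p q H) by lra. ring. Qed.

Lemma psi_sq_Lf p q (H : hyp p q) s (Hs : s * s = 1) k :
  psi p q s (Lf k) * psi p q s (Lf k) = wgt p q k * p k.
Proof. unfold psi. pose proof (spow_sq s (S k) Hs). pose proof (wgt_pos p q H k).
  transitivity ((s^S k*s^S k) * (sqrt (wgt p q k) * sqrt (wgt p q k)) * (sqrt (p k) * sqrt (p k))). ring.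
  rewrite H0, sqrt_sqrt, (sp2 p q H) by lra. ring. Qed.

Lemma p0_1 p q (H : hyp p q) : p 0%nat = 1.
Proof. pose proof (hpq _ _ H 0); rewrite (hq_0 _ _ H) in H0; lra. Qed.

Lemma sum2wp p q (H : hyp p q) K :
  sum_f_R0 (fun k => 2 * (wgt p q k * p k)) K = sum_f_R0 (wgt p q) K + wgt p q (S K) * q (S K).
Proof.
  induction K; simpl sum_f_R0.
  - rewrite wgt_rel by auto. rewrite (p0_1 p q H). change (wgt p q 0) with 1. ring.
  - rewrite IHK. rewrite (wgt_rel p q H (S K)). pose proof (hpq p q H (S K)). 
    transitivity (sum_f_R0 (wgt p q) K + wgt p q (S K) * (p (S K) + q (S K)) + wgt p q (S K) * p (S K)). ring.
    rewrite H0. ring.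
Qed.

Lemma CR_bound p q (H : hyp p q) CR (HCR : infinite_sum (fun n => wgt p q (S n)) CR) K :
  sum_f_R0 (wgt p q) (S K) <= 1 + CR.
Proof.
  rewrite decomp_sum by lia. simpl pred. change (wgt p q 0) with 1.
  assert (sum_f_R0 (fun i => wgt p q (S i)) K <= CR).
  { apply growing_ineq. intro n. simpl. pose proof (wgt_pos p q H (S (S n))). lra. exact HCR. }
  lra.
Qed.

Lemma CR_nonneg p q (H : hyp p q) CR (HCR : infinite_sum (fun n => wgt p q (S n)) CR) : 0 <= CR.
Proof. pose proof (CR_bound p q H CR HCR 0). simpl in H0.
  pose proof (wgt_pos p q H 1). change (wgt p q 0) with 1 in H0. lra. Qed.

Lemma psi_norm p q (H : hyp p q) s (Hs : s * s = 1) CR (HCR : infinite_sum (fun n => wgt p q (S n)) CR) K :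
  0 <= sumA K (fun e => psi p q s e * psi p q s e) <= 1 + CR.
Proof.
  split. apply sumA_nonneg; intro; nra.
  unfold sumA. rewrite (sum_eq _ (fun k => 2 * (wgt p q k * p k))).
  rewrite sum2wp by auto. pose proof (CR_bound p q H CR HCR K). simpl in H0.
  pose proof (wgt_pos p q H (S K)). pose proof (hq0 p q H (S K)). pose proof (hpq p q H (S K)).
  pose proof (hp0 p q H (S K)). nra.
  intros. rewrite psi_sq_Rt, psi_sq_Lf by auto. ring.
Qed.

Lemma sumA_cv K (F : nat -> arc -> R) G :
  (forall a, Un_cv (fun n => F n a) (G a)) -> Un_cv (fun n => sumA K (F n)) (sumA K G).
Proof.
  intros H. unfold sumA. induction K; simpl.
  - apply CV_plus; auto.
  - apply CV_plus; auto. apply CV_plus; auto.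
Qed.

Lemma cv_le_ev u l b N : Un_cv u l -> (forall n, (N <= n)%nat -> u n <= b) -> l <= b.
Proof.
  intros Hu Hb. destruct (Rle_or_lt l b); auto. exfalso.
  destruct (Hu (l - b)) as [M HM]. lra.
  specialize (HM (max N M) ltac:(lia)). specialize (Hb (max N M) ltac:(lia)).
  unfold R_dist in HM. apply Rabs_def2 in HM. lra.
Qed.

Lemma sumA_sum K (F : nat -> arc -> R) n :
  sumA K (fun e => sum_f_R0 (fun t => F t e) n) = sum_f_R0 (fun t => sumA K (F t)) n.
Proof. induction n; simpl. auto. rewrite sumA_plus, IHn. auto. Qed.

Lemma arith_final beta c N2 : 0 < N2 ->
  (forall eps, 0 < eps -> exists qK, 0 <= qK <= N2 /\ (beta - c * qK) * (beta - c * qK) <= eps * N2) ->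
  beta * beta <= c * c * (N2 * N2).
Proof.
  intros HN Hf. apply Rnot_lt_le. intro Hlt.
  assert (Hb : Rabs c * N2 < Rabs beta).
  { assert (0 <= Rabs c) by apply Rabs_pos. assert (0 <= Rabs beta) by apply Rabs_pos.
    assert (Rabs c * Rabs c = c * c) by (rewrite <- Rabs_mult; apply Rabs_pos_eq; nra).
    assert (Rabs beta * Rabs beta = beta * beta) by (rewrite <- Rabs_mult; apply Rabs_pos_eq; nra).
    destruct (Rlt_or_le (Rabs c * N2) (Rabs beta)); auto. exfalso.
    assert (Rabs beta * Rabs beta <= (Rabs c * N2) * (Rabs c * N2)) by (apply Rmult_le_compat; lra).
    nra. }
  set (d := Rabs beta - Rabs c * N2).
  destruct (Hf (d * d / (2 * N2))) as [qK [[Hq1 Hq2] Hq]].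
  { apply Rdiv_lt_0_compat; unfold d; nra. }
  assert (d <= Rabs (beta - c * qK)).
  { assert (Rabs (c * qK) <= Rabs c * N2).
    { rewrite Rabs_mult, (Rabs_pos_eq qK) by lra. apply Rmult_le_compat_l; auto. apply Rabs_pos. }
    pose proof (Rabs_triang_inv beta (c * qK)). unfold d; lra. }
  assert (0 < d) by (unfold d; lra).
  assert (d * d <= (beta - c * qK) * (beta - c * qK)).
  { rewrite <- (Rabs_pos_eq d) in H by lra. apply Rsqr_le_abs_1 in H. unfold Rsqr in H. auto. }
  assert (d * d / (2 * N2) * N2 = d * d / 2) by (field; lra).
  nra.
Qed.

Lemma sumA_scal K F c : sumA K (fun e => c * F e) = c * sumA K F.
Proof. unfold sumA; induction K; simpl. ring. rewrite IHK. ring. Qed.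

Lemma Vpow1_supp p q s H Hs K0 f t : suppA K0 f -> suppA (K0 + t) (Vpow (ips1 p q s H Hs) t f).
Proof.
  intros Hf. induction t; simpl. rewrite Nat.add_0_r; auto.
  intros e He. unfold Ws. rewrite (Ur_supp p q (K0 + t)); auto. ring. lia.
Qed.

Lemma ip_psi_step p q (H : hyp p q) s (Hs : s * s = 1) f K1 K : suppA K1 f -> (K1 < K)%nat ->
  sumA K (fun e => Ws p q s f e * psi p q s e) = sumA K (fun e => f e * psi p q s e).
Proof.
  intros Hf HK. pose proof (iso_id p q H f (psi p q s) K).
  rewrite (Hf (Lf K)) in H0 by (simpl; lia).
  assert (Ur p q f (Rt K) = 0).
  { unfold Ur, coinr, projAr, ipar; simpl. rewrite (Hf (Lf K)), (Hf (Rt (S K))) by (simpl; lia). ring. }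
  rewrite H1 in H0. rewrite <- (sumA_fext K (fun e => Ur p q f e * Ur p q (psi p q s) e)). lra.
  intro e. unfold Ws. transitivity (s * Ur p q f e * (s * Ur p q (psi p q s) e)).
  transitivity (s * s * (Ur p q f e * Ur p q (psi p q s) e)). rewrite Hs; ring. ring.
  rewrite psi_fix; auto.
Qed.

Lemma ip_psi_Vpow p q (H : hyp p q) s (Hs : s * s = 1) f K0 K t : suppA K0 f -> (K0 + t < K)%nat ->
  sumA K (fun e => Vpow (ips1 p q s H Hs) t f e * psi p q s e) = sumA K (fun e => f e * psi p q s e).
Proof.
  intros Hf. induction t; intros HK. simpl; auto.
  simpl. rewrite (ip_psi_step p q H s Hs _ (K0 + t)). apply IHt; lia.
  apply Vpow1_supp; auto. lia.
Qed.

Lemma ip_psi_Av p q (H : hyp p q) s (Hs : s * s = 1) f K0 K T : suppA K0 f -> (K0 + T < K)%nat ->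
  sumA K (fun e => Av (ips1 p q s H Hs) T f e * psi p q s e) = sumA K (fun e => f e * psi p q s e).
Proof.
  intros Hf HK. unfold Av.
  rewrite (sumA_fext K _ (fun e => / INR (S T) * sum_f_R0 (fun t => Vpow (ips1 p q s H Hs) t f e * psi p q s e) T)).
  rewrite sumA_scal, sumA_sum.
  rewrite (sum_eq _ (fun _ => sumA K (fun e => f e * psi p q s e))).
  rewrite sum_cte. field. pose proof (INR_S_pos T); lra.
  intros. apply ip_psi_Vpow with K0; auto; lia.
  intro e. rewrite (sum_eq (fun t => Vpow (ips1 p q s H Hs) t f e * psi p q s e) (fun t => psi p q s e * Vpow (ips1 p q s H Hs) t f e)) by (intros; ring).
  rewrite sum_scal. unfold Rdiv. ring.
Qed.

Lemma sumA_le_ip1 f K1 K : suppA K1 f -> sumA K (fun e => f e * f e) <= ip1 f f.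
Proof. intros Hf. rewrite (ip1_eq (max K K1)) by (apply (suppA_mono K1); auto; lia).
  apply sumA_mono. intro; nra. lia. Qed.

Lemma good1_supp f : good1 f -> exists K, suppA K f.
Proof. auto. Qed.

Lemma mean_erg p q (H : hyp p q) s (Hs : s * s = 1) CR (HCR : infinite_sum (fun n => wgt p q (S n)) CR)
  f K0 (Hf : suppA K0 f) :
  exists c, (forall e, Un_cv (fun T => Av (ips1 p q s H Hs) T f e) (c * psi p q s e)) /\
    sumA K0 (fun e => f e * psi p q s e) * sumA K0 (fun e => f e * psi p q s e) <= c * c * ((1 + CR) * (1 + CR)).
Proof.
  set (S := ips1 p q s H Hs).
  assert (Gf : good S f) by (exists K0; auto).
  assert (Hc : forall g, good S g -> forall a, g a * g a <= ip S g g) by (intros; apply coord1; auto).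
  set (zl := fun e => proj1_sig (Av_cv _ S f Gf Hc e)).
  assert (cvz : forall e, Un_cv (fun T => Av S T f e) (zl e)) by (intro e; unfold zl; destruct (Av_cv _ S f Gf Hc e); auto).
  assert (fixz : forall e, s * Ur p q zl e = zl e).
  { intro e. pose proof (Av_V_cv _ S f (zl e) e Gf Hc (cvz e)).
    assert (C : Un_cv (fun T => s * Ur p q (Av S T f) e) (s * Ur p q zl e)).
    { apply CV_mult. intros eps Heps; exists 0%nat; intros; unfold R_dist; rewrite Rminus_diag, Rabs_R0; auto.
      apply Ur_cv. auto. }
    eapply UL_sequence; eauto. }
  set (c := zl (Rt 0)).
  assert (zc : forall e, zl e = c * psi p q s e) by (apply fix_unique; auto).
  exists c. split. intro e. rewrite <- zc. auto.
  pose proof (CR_nonneg p q H CR HCR).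
  apply arith_final. lra.
  intros eps Heps.
  destruct (avg_cauchy _ S f Gf (sqrt eps) (sqrt_lt_R0 _ Heps)) as [N HN].
  set (K := Datatypes.S (K0 + N)).
  assert (GA : forall T, exists K1, suppA K1 (Av S T f)).
  { intro T. exact (good_Av _ S T f Gf). }
  assert (C1 : sumA K (fun e => (Av S N f e - zl e) * (Av S N f e - zl e)) <= eps).
  { apply (cv_le_ev (fun U => sumA K (fun e => (Av S N f e - Av S U f e) * (Av S N f e - Av S U f e))) _ _ N).
    apply sumA_cv. intro a. apply CV_mult; apply CV_minus; auto;
      intros e0 He0; exists 0%nat; intros; unfold R_dist; rewrite Rminus_diag, Rabs_R0; auto.
    intros U HU. specialize (HN N U (le_n N) HU).
    assert (Gd : good S (fun a => Av S N f a - Av S U f a)) by (apply good_sub; apply good_Av; auto).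
    destruct Gd as [K1 HK1].
    eapply Rle_trans. apply (sumA_le_ip1 _ K1); auto.
    unfold nr in HN. apply sqrt_lt_0_alt in HN. left. exact HN. }
  set (qK := sumA K (fun e => psi p q s e * psi p q s e)).
  exists qK. split. apply (psi_norm p q H s Hs CR HCR K).
  assert (E1 : sumA K (fun e => (Av S N f e - c * psi p q s e) * psi p q s e)
     = sumA K0 (fun e => f e * psi p q s e) - c * qK).
  { rewrite (sumA_fext K _ (fun e => 1 * (Av S N f e * psi p q s e) + (- c) * (psi p q s e * psi p q s e))) by (intro; ring).
    rewrite sumA_lin. unfold qK, S. rewrite (ip_psi_Av p q H s Hs f K0) by (auto; unfold K; lia).
    rewrite (sumA_ext K0 K). ring. apply suppA_prod; auto. unfold K; lia. }
  rewrite <- E1.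
  pose proof (CS _ (ipsK (sumA K) (sumA_lin K) (sumA_nonneg K)) (fun e => Av S N f e - c * psi p q s e) (psi p q s) I I) as Hcs.
  simpl in Hcs. fold qK in Hcs.
  assert (sumA K (fun a => (Av S N f a - c * psi p q s a) * (Av S N f a - c * psi p q s a)) <= eps).
  { rewrite <- (sumA_fext K (fun e => (Av S N f e - zl e) * (Av S N f e - zl e))); auto.
    intro; rewrite zc; auto. }
  assert (0 <= qK) by (apply (psi_norm p q H s Hs CR HCR K)).
  assert (qK <= 1 + CR) by (apply (psi_norm p q H s Hs CR HCR K)).
  assert (0 <= sumA K (fun a => (Av S N f a - c * psi p q s a) * (Av S N f a - c * psi p q s a)))
    by (apply sumA_nonneg; intro; apply Rle_0_sqr).
  nra.
Qed.

Lemma alt_sum T : sum_f_R0 (fun t => (-1) ^ t) T = (1 + (-1) ^ T) / 2.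
Proof. induction T; simpl sum_f_R0. simpl; field. rewrite IHT. simpl. field. Qed.

Lemma alt_cv : Un_cv (fun T => sum_f_R0 (fun t => (-1) ^ t) T / INR (S T)) 0.
Proof.
  intros eps Heps. destruct (archimed_cor1 eps Heps) as [N [HN1 HN2]].
  exists N. intros n Hn. unfold R_dist. rewrite Rminus_0_r, alt_sum.
  pose proof (pow_1_abs n). pose proof (INR_S_pos n).
  assert (INR N <= INR (S n)) by (apply le_INR; lia).
  assert (0 < INR N) by (apply lt_0_INR; lia).
  assert (/ INR (S n) <= / INR N) by (apply Rinv_le_contravar; lra).
  unfold Rdiv. rewrite Rabs_mult, Rabs_mult, (Rabs_pos_eq (/ INR (S n))) by (left; apply Rinv_0_lt_compat; lra).
  rewrite (Rabs_pos_eq (/2)) by lra.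
  assert (Rabs (1 + (-1) ^ n) <= 2) by (eapply Rle_trans; [apply Rabs_triang| rewrite Rabs_R1; lra]).
  assert (0 <= Rabs (1 + (-1) ^ n)) by apply Rabs_pos.
  assert (0 <= / INR (S n)) by (left; apply Rinv_0_lt_compat; lra).
  nra.
Qed.

Lemma cst_cv c : Un_cv (fun _ : nat => c) c.
Proof. intros eps Heps; exists 0%nat; intros; unfold R_dist; rewrite Rminus_diag, Rabs_R0; auto. Qed.

Lemma pointwise_ineq u a b (sg : R) : sg * sg = 1 ->
  2 * a * u + 2 * b * (sg * u) - a * a - b * b - 2 * a * b * sg <= u * u.
Proof. intros. assert (0 <= (u - a - sg * b) * (u - a - sg * b)) by apply Rle_0_sqr. nra. Qed.

Lemma lower_coord p q (H : hyp p q) CR (HCR : infinite_sum (fun n => wgt p q (S n)) CR)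
  f K0 (Hf : suppA K0 f) :
  exists cp cm, sumA K0 (fun e => f e * psi p q 1 e) * sumA K0 (fun e => f e * psi p q 1 e) <= cp * cp * ((1 + CR) * (1 + CR)) /\
    sumA K0 (fun e => f e * psi p q (-1) e) * sumA K0 (fun e => f e * psi p q (-1) e) <= cm * cm * ((1 + CR) * (1 + CR)) /\
    forall e, exists L, Un_cv (fun T => sum_f_R0 (fun t => Urpow p q t f e * Urpow p q t f e) T / INR (S T)) L /\
       L >= cp * cp * (psi p q 1 e * psi p q 1 e) + cm * cm * (psi p q (-1) e * psi p q (-1) e).
Proof.
  assert (H1 : 1 * 1 = 1) by ring. assert (Hm : -1 * -1 = 1) by ring.
  destruct (mean_erg p q H 1 H1 CR HCR f K0 Hf) as [cp [Hcp Bp]].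
  destruct (mean_erg p q H (-1) Hm CR HCR f K0 Hf) as [cm [Hcm Bm]].
  exists cp, cm. split; auto. split; auto. intro e.
  set (S2 := ips2 p q H).
  set (F := fun x : arc * arc => f (fst x) * f (snd x)).
  assert (GF : good S2 F).
  { exists K0. intros e1 e2 He. unfold F. simpl. destruct He; [rewrite Hf | rewrite (Hf e2)]; auto; ring. }
  destruct (Av_cv _ S2 F GF (fun g Hg a => coord2 g a Hg) (e, e)) as [L HL].
  exists L.
  assert (ED : forall T, Av S2 T F (e, e) = sum_f_R0 (fun t => Urpow p q t f e * Urpow p q t f e) T / INR (S T)).
  { intro T. unfold Av. f_equal. apply sum_eq. intros. unfold F, S2. rewrite Vpow2. auto. }
  split.
  { intros eps Heps. destruct (HL eps Heps) as [N HN]. exists N. intros n Hn. rewrite <- ED. auto. }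
  set (a := cp * psi p q 1 e). set (b := cm * psi p q (-1) e).
  apply Rle_ge.
  replace (cp * cp * (psi p q 1 e * psi p q 1 e) + cm * cm * (psi p q (-1) e * psi p q (-1) e)) with
    (2 * a * (cp * psi p q 1 e) + 2 * b * (cm * psi p q (-1) e) - a * a - b * b - 2 * a * b * 0)
    by (unfold a, b; ring).
  apply (Rle_cv_lim (Un := fun T => 2 * a * Av (ips1 p q 1 H H1) T f e + 2 * b * Av (ips1 p q (-1) H Hm) T f e - a * a - b * b
      - 2 * a * b * (sum_f_R0 (fun t => (-1) ^ t) T / INR (S T))) (Vn := fun T => Av S2 T F (e, e))
    (l1 := 2 * a * (cp * psi p q 1 e) + 2 * b * (cm * psi p q (-1) e) - a * a - b * b - 2 * a * b * 0) (l2 := L)).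
  - intro T. rewrite ED. unfold Av. 
    rewrite (sum_eq (fun t => Vpow (ips1 p q 1 H H1) t f e) (fun t => Urpow p q t f e)) by (intros; rewrite Vpow1, pow1; ring).
    rewrite (sum_eq (fun t => Vpow (ips1 p q (-1) H Hm) t f e) (fun t => (-1) ^ t * Urpow p q t f e)) by (intros; rewrite Vpow1; ring).
    pose proof (INR_S_pos T).
    assert (E : forall X Y Z : R, 2 * a * (X / INR (S T)) + 2 * b * (Y / INR (S T)) - a * a - b * b - 2 * a * b * (Z / INR (S T))
        = (2 * a * X + 2 * b * Y - (a * a + b * b) * INR (S T) - 2 * a * b * Z) / INR (S T))
      by (intros; field; lra).
    rewrite E. unfold Rdiv. apply Rmult_le_compat_r. left; apply Rinv_0_lt_compat; lra.
    assert (Hs2 : sum_f_R0 (fun t => 2 * a * Urpow p q t f e + 2 * b * ((-1) ^ t * Urpow p q t f e)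
        - (a * a + b * b) - 2 * a * b * (-1) ^ t) T <= sum_f_R0 (fun t => Urpow p q t f e * Urpow p q t f e) T).
    { apply sum_Rle. intros t _.
      pose proof (pointwise_ineq (Urpow p q t f e) a b ((-1) ^ t)).
      assert ((-1) ^ t * (-1) ^ t = 1) by (apply spow_sq; ring). specialize (H2 H3). lra. }
    rewrite !minus_sum, sum_cte, !sum_plus, !sum_scal in Hs2. change (sum_f_R0 (pow (-1)) T) with (sum_f_R0 (fun t => (-1)^t) T) in Hs2. lra.
  - apply CV_minus. apply CV_minus. apply CV_minus. apply CV_plus.
    apply CV_mult. apply cst_cv. apply Hcp. apply CV_mult. apply cst_cv. apply Hcm.
    apply cst_cv. apply cst_cv. apply CV_mult. apply cst_cv. apply alt_cv.
  - auto.
Qed.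

Lemma sum_single (g : nat -> R) k0 n : (forall k, k <> k0 -> g k = 0) -> (k0 <= n)%nat -> sum_f_R0 g n = g k0.
Proof.
  intros Hg Hn. induction n.
  - assert (k0 = 0%nat) by lia. subst. simpl; auto.
  - destruct (Nat.eq_dec k0 (S n)).
    + subst. simpl. rewrite (sum_eq _ (fun _ => 0)). rewrite sum_cte. ring.
      intros; apply Hg; lia.
    + simpl. rewrite IHn by lia. rewrite (Hg (S n)) by lia. ring.
Qed.

Lemma beta_val p q (H : hyp p q) s (Hs : s * s = 1) f j :
  (forall e, tail e <> j -> f e = 0) ->
  sumA j (fun e => f e * psi p q s e) = s ^ j * sqrt (wgt p q j) * ipar p q j f.
Proof.
  intros Hf. unfold sumA. rewrite sum_plus. destruct j.
  - simpl. rewrite (Hf (Lf 0)) by (simpl; lia). ring.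
  - rewrite (sum_single _ (S j)), (sum_single (fun k => f (Lf k) * psi p q s (Lf k)) j); try lia.
    + unfold psi, ipar. rewrite (sqrt_rel p q H j). ring.
    + intros k Hk. rewrite Hf. ring. simpl. lia.
    + intros k Hk. rewrite Hf. ring. simpl. lia.
Qed.

Lemma beta_sq p q (H : hyp p q) s (Hs : s * s = 1) f j :
  (forall e, tail e <> j -> f e = 0) ->
  sumA j (fun e => f e * psi p q s e) * sumA j (fun e => f e * psi p q s e) = wgt p q j * (ipar p q j f * ipar p q j f).
Proof.
  intros Hf. rewrite beta_val by auto. pose proof (spow_sq s j Hs). pose proof (wgt_pos p q H j).
  transitivity ((s^j * s^j) * (sqrt (wgt p q j) * sqrt (wgt p q j)) * (ipar p q j f * ipar p q j f)). ring.
  rewrite H0, sqrt_sqrt by lra. ring.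
Qed.

Lemma psi_vertex p q (H : hyp p q) s (Hs : s * s = 1) i :
  psi p q s (Rt i) * psi p q s (Rt i) + match i with O => 0 | S k => psi p q s (Lf k) * psi p q s (Lf k) end = wgt p q i.
Proof.
  rewrite psi_sq_Rt by auto. destruct i.
  - rewrite (p0_1 p q H). lra.
  - rewrite psi_sq_Lf by auto. rewrite <- (wgt_rel p q H i). pose proof (hpq p q H (S i)).
    transitivity (wgt p q (S i) * (p (S i) + q (S i))). ring. rewrite H0; ring.
Qed.

Definition Dq p q f e n := sum_f_R0 (fun t => Urpow p q t f e * Urpow p q t f e) n / INR (S n).

Lemma time_avg_split p q Psi0 i n :
  time_avg p q Psi0 i n =
  Dq p q (fun a => re (Psi0 a)) (Rt i) n + Dq p q (fun a => im (Psi0 a)) (Rt i) n +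
  match i with O => 0 | S k => Dq p q (fun a => re (Psi0 a)) (Lf k) n + Dq p q (fun a => im (Psi0 a)) (Lf k) n end.
Proof.
  unfold time_avg, Dq, prob, Cxnorm2.
  pose proof (INR_S_pos n).
  destruct i.
  - rewrite (sum_eq _ (fun t => Urpow p q t (fun a => re (Psi0 a)) (Rt 0) * Urpow p q t (fun a => re (Psi0 a)) (Rt 0)
       + Urpow p q t (fun a => im (Psi0 a)) (Rt 0) * Urpow p q t (fun a => im (Psi0 a)) (Rt 0))).
    rewrite sum_plus. field. lra.
    intros. rewrite Upow_re, Upow_im. ring.
  - rewrite (sum_eq _ (fun t => (Urpow p q t (fun a => re (Psi0 a)) (Rt (S i)) * Urpow p q t (fun a => re (Psi0 a)) (Rt (S i))
       + Urpow p q t (fun a => im (Psi0 a)) (Rt (S i)) * Urpow p q t (fun a => im (Psi0 a)) (Rt (S i)))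
       + (Urpow p q t (fun a => re (Psi0 a)) (Lf i) * Urpow p q t (fun a => re (Psi0 a)) (Lf i)
       + Urpow p q t (fun a => im (Psi0 a)) (Lf i) * Urpow p q t (fun a => im (Psi0 a)) (Lf i)))).
    rewrite !sum_plus. field. lra.
    intros. rewrite !Upow_re, !Upow_im. ring.
Qed.

Theorem corollary1
  (p q r : nat -> R)
  (Hp0 : forall j, 0 <= p j) (Hq0 : forall j, 0 <= q j) (Hr0 : forall j, 0 <= r j)
  (Hsum : forall j, p j + q j + r j = 1)
  (Hq_0 : q 0%nat = 0)
  (Hp_pos : forall j, 0 < p j)
  (Hq_pos : forall j, (1 <= j)%nat -> 0 < q j)
  (Hr : forall j, r j = 0)
  (CR : R)
  (HCR : infinite_sum (fun n => wgt p q (S n)) CR)  (* C_R = sum_{j>=1} ... < oo *)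
  (j : nat) (Psi0 : state)
  (Hsupp : forall e, tail e <> j -> Psi0 e = Cx0)
  (Hunit : Cxnorm2 (Psi0 (Rt j)) +
           match j with O => 0 | S k => Cxnorm2 (Psi0 (Lf k)) end = 1)
  (i : nat) :
  exists mu : R,
    Un_cv (time_avg p q Psi0 i) mu /\
    mu >= 2 * Cxnorm2 (ip_a p q j Psi0) * pi_stat p q CR i * pi_stat p q CR j.
Proof.
  assert (H : hyp p q).
  { constructor; auto. intro k. pose proof (Hsum k); rewrite Hr in H; lra.
    intro k. apply Hq_pos. lia. }
  set (fr := fun a => re (Psi0 a)). set (fi := fun a => im (Psi0 a)).
  assert (Zr : forall e, tail e <> j -> fr e = 0) by (intros e He; unfold fr; rewrite Hsupp; auto).
  assert (Zi : forall e, tail e <> j -> fi e = 0) by (intros e He; unfold fi; rewrite Hsupp; auto).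
  assert (Sr : suppA j fr) by (intros e He; apply Zr; destruct e; simpl in *; lia).
  assert (Si : suppA j fi) by (intros e He; apply Zi; destruct e; simpl in *; lia).
  assert (H1 : 1 * 1 = 1) by ring. assert (Hm : -1 * -1 = 1) by ring.
  destruct (lower_coord p q H CR HCR fr j Sr) as [cpr [cmr [Bpr [Bmr Lr]]]].
  destruct (lower_coord p q H CR HCR fi j Si) as [cpi [cmi [Bpi [Bmi Li]]]].
  rewrite (beta_sq p q H 1 H1 fr j Zr) in Bpr. rewrite (beta_sq p q H (-1) Hm fr j Zr) in Bmr.
  rewrite (beta_sq p q H 1 H1 fi j Zi) in Bpi. rewrite (beta_sq p q H (-1) Hm fi j Zi) in Bmi.
  pose proof (CR_nonneg p q H CR HCR) as HCR0.
  set (N2 := 1 + CR).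
  assert (HN : 0 < N2) by (unfold N2; lra).
  assert (Ereip : re (ip_a p q j Psi0) = ipar p q j fr) by (destruct j; reflexivity).
  assert (Eimip : im (ip_a p q j Psi0) = ipar p q j fi) by (destruct j; reflexivity).
  assert (Epi : forall k, pi_stat p q CR k = wgt p q k / N2).
  { intro k. unfold pi_stat, N2. assert (M : match k with O => 1 | S _ => wgt p q k end = wgt p q k) by (destruct k; reflexivity). rewrite M. unfold Rdiv. ring. }
  unfold Cxnorm2. rewrite Ereip, Eimip, !Epi.
  pose proof (wgt_pos p q H i) as Wi. pose proof (wgt_pos p q H j) as Wj.
  set (Ir := ipar p q j fr). set (Ii := ipar p q j fi). fold Ir in Bpr, Bmr. fold Ii in Bpi, Bmi.
  set (C := cpr * cpr + cmr * cmr + cpi * cpi + cmi * cmi).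
  assert (HC : 2 * wgt p q j * (Ir * Ir + Ii * Ii) <= C * (N2 * N2)) by (unfold C, N2; lra).
  assert (target : forall mu, mu >= C * wgt p q i ->
     mu >= 2 * (Ir * Ir + Ii * Ii) * (wgt p q i / N2) * (wgt p q j / N2)).
  { intros mu Hmu. apply Rle_ge. apply Rle_trans with (C * wgt p q i); [|lra].
    assert (E : 2 * (Ir * Ir + Ii * Ii) * (wgt p q i / N2) * (wgt p q j / N2)
      = (2 * wgt p q j * (Ir * Ir + Ii * Ii)) / (N2 * N2) * wgt p q i) by (field; lra).
    rewrite E. apply Rmult_le_compat_r; [lra|].
    apply Rmult_le_reg_r with (N2 * N2). nra. unfold Rdiv. rewrite Rmult_assoc, Rinv_l by nra. lra. }
  pose proof (psi_vertex p q H 1 H1 i) as V1. pose proof (psi_vertex p q H (-1) Hm i) as V2.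
  destruct (Lr (Rt i)) as [L1 [HL1 GL1]]. destruct (Li (Rt i)) as [L2 [HL2 GL2]].
  destruct i as [|k].
  - exists (L1 + L2 + 0). split.
    + intros eps Heps. destruct (CV_plus _ _ _ _ HL1 HL2 eps Heps) as [N HN'].
      exists N. intros n Hn. rewrite time_avg_split. specialize (HN' n Hn). fold fr fi. unfold Dq.
      replace (L1 + L2 + 0) with (L1 + L2) by ring. rewrite Rplus_0_r. exact HN'.
    + apply target. unfold C. rewrite Rplus_0_r in V1, V2. rewrite <- V1 at 1.
      assert (cpr * cpr * psi p q 1 (Rt 0) * psi p q 1 (Rt 0) >= 0) by nra.
      nra.
  - destruct (Lr (Lf k)) as [L3 [HL3 GL3]]. destruct (Li (Lf k)) as [L4 [HL4 GL4]].
    exists (L1 + L2 + (L3 + L4)). split.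
    + pose proof (CV_plus _ _ _ _ (CV_plus _ _ _ _ HL1 HL2) (CV_plus _ _ _ _ HL3 HL4)) as HV.
      intros eps Heps. destruct (HV eps Heps) as [N HN'].
      exists N. intros n Hn. rewrite time_avg_split. specialize (HN' n Hn). fold fr fi. unfold Dq. auto.
    + apply target. unfold C.
      set (a1 := psi p q 1 (Rt (S k)) * psi p q 1 (Rt (S k))) in *.
      set (a2 := psi p q 1 (Lf k) * psi p q 1 (Lf k)) in *.
      set (b1 := psi p q (-1) (Rt (S k)) * psi p q (-1) (Rt (S k))) in *.
      set (b2 := psi p q (-1) (Lf k) * psi p q (-1) (Lf k)) in *.
      assert (wgt p q (S k) * (cpr * cpr + cmr * cmr) = cpr * cpr * (a1 + a2) + cmr * cmr * (b1 + b2))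
        by (rewrite V1, V2; ring).
      assert (wgt p q (S k) * (cpi * cpi + cmi * cmi) = cpi * cpi * (a1 + a2) + cmi * cmi * (b1 + b2))
        by (rewrite V1, V2; ring).
      lra.
Qed.
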